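(* Let $F\in\mathfrak{g}$ be principal nilpotent and let $F'\in Z(F)$. Then $\mathrm{Im}(\mathrm{ad}_{F'})\subset\mathrm{Im}(\mathrm{ad}_F)$.
   Context: $\mathfrak{g}$ is a complex simple Lie algebra. $F$ is principal nilpotent if $\mathrm{ad}_F$ is nilpotent and $Z(F)=\{y\in\mathfrak{g}:[F,y]=0\}$ has dimension $\mathrm{rk}(\mathfrak{g})$. $\mathrm{Im}(\mathrm{ad}_x)=\{[x,y]:y\in\mathfrak{g}\}$. *)

(* Defs.v *)
From mathcomp Require Import all_boot all_algebra.
From mathcomp Require Import reals complex.
Set Implicit Arguments. Unset Strict Implicit. Unset Printing Implicit Defensive.
Import GRing.Theory.
Local Open Scope ring_scope.

Definition is_lie_bracket (K : fieldType) (V : vectType K) (br : V -> V -> V) : Prop :=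
  [/\ (forall z, linear (br ^~ z)),
      (forall x, linear (br x)),
      (forall x, br x x = 0) &
      (forall x y z, br x (br y z) + br y (br z x) + br z (br x y) = 0)].

Definition lie_ideal (K : fieldType) (V : vectType K) (br : V -> V -> V)
  (I : {vspace V}) : Prop :=
  forall x y, y \in I -> br x y \in I.

Definition simple_lie (K : fieldType) (V : vectType K) (br : V -> V -> V) : Prop :=
  is_lie_bracket br /\ (exists x y, br x y <> 0) /\
  (forall I : {vspace V}, lie_ideal br I -> I = 0%VS \/ I = fullv).

(* ad_x as an element of 'End(V) (br x is linear under is_lie_bracket) *)
Definition ad (K : fieldType) (V : vectType K) (br : V -> V -> V) (x : V) : 'End(V) :=
  linfun (br x).

Definition centralizer (K : fieldType) (V : vectType K) (br : V -> V -> V) (x : V)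
  : {vspace V} := lker (ad br x).

(* rank of g: the minimal dimension of a centralizer Z(x), x \in g
   (= dimension of a Cartan subalgebra; attained at regular elements). *)
Definition is_lie_rank (K : fieldType) (V : vectType K) (br : V -> V -> V) (r : nat) : Prop :=
  (exists x, \dim (centralizer br x) = r) /\ (forall x, (r <= \dim (centralizer br x))%N).

Definition ad_nilpotent (K : fieldType) (V : vectType K) (br : V -> V -> V) (F : V) : Prop :=
  exists n : nat, forall y, iter n (br F) y = 0.

Definition principal_nilpotent (K : fieldType) (V : vectType K) (br : V -> V -> V) (F : V)
  : Prop :=
  ad_nilpotent br F /\ (forall r, is_lie_rank br r -> \dim (centralizer br F) = r).

(* Main.v *)
From HB Require Import structures.
From mathcomp Require Import all_boot all_algebra.
From mathcomp Require Import reals complex zify.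
Require Import Defs.
From Stdlib Require Import Classical.
Set Implicit Arguments. Unset Strict Implicit. Unset Printing Implicit Defensive.
Import GRing.Theory Num.Theory.
Local Open Scope ring_scope.

Lemma core (K : numFieldType) n (A B : 'M[K]_n) (u : 'rV[K]_n) :
  (forall t : K, \rank (A + t *: B)%R <= \rank A)%N -> u *m A = 0 -> (u *m B <= A)%MS.
Proof.
move=> hr uA0; apply/negPn/negP => hn.
set k := \rank A.
set C := row_base A.
have CA : (C <= A)%MS by rewrite eq_row_base.
set G := C *m pinvmx A.
have GA : G *m A = C by rewrite mulmxKpV.
set w := u *m B.
set Y0 := col_mx C w : 'M_(k + 1, n).
have rY0 : row_free Y0.
  rewrite /row_free eqn_leq rank_leq_row /=.
  rewrite /Y0 -addsmxE.
  have : (C < C + w)%MS.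
    rewrite ltmxE addsmxSl /= addsmx_sub submx_refl /=.
    by rewrite eq_row_base.
  by rewrite ltmxErank => /andP[_]; rewrite eq_row_base addn1.
have [Z YZ] := row_freeP rY0.
set N := col_mx (G *m B) (0 : 'rV_n) : 'M_(k + 1, n).
set E := N *m Z.
have [s s0 hs] : exists2 s : K, s != 0 & ~~ root (char_poly E) s.
  pose p := char_poly E.
  have p0 : p != 0 := monic_neq0 (char_poly_monic E).
  pose rs := [seq (i.+1)%:R : K | i <- iota 0 (size p)].
  have : ~~ all (root p) rs.
    apply/negP => hall.
    have hu : uniq rs.
      by rewrite map_inj_uniq ?iota_uniq // => i j /eqP; rewrite eqr_nat eqSS => /eqP.
    by have := max_poly_roots p0 hall hu; rewrite size_map size_iota ltnn.
  case/allPn => x /mapP [i _ ->] hx.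
  by exists (i.+1)%:R => //; rewrite pnatr_eq0.
set t := - s^-1.
have tn0 : t != 0 by rewrite oppr_eq0 invr_eq0.
set X := col_mx G (t^-1 *: u) : 'M_(k + 1, n).
have XM : X *m (A + t *: B) = Y0 + t *: N.
  rewrite mulmxDr -scalemxAr !mul_col_mx GA -!scalemxAl uA0 scaler0.
  rewrite scale_col_mx add_col_mx scalerA mulfV // scale1r.
  by rewrite /Y0 /N scale_col_mx scaler0 add_col_mx addr0 add0r.
have YN : (Y0 + t *: N) *m Z = (- s^-1) *: (E - s%:M).
  rewrite mulmxDl YZ -scalemxAl -/E /t scalerBr scale_scalar_mx mulNr mulVf //.
  by rewrite (raddfN (@scalar_mx _ _)) opprK addrC.
have rE : \rank (E - s%:M) = (k + 1)%N.
  apply/eqP; rewrite -/(row_free _) -kermx_eq0.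
  by rewrite -eigenvalue_root_char in hs; apply/negPn: hs.
have : (k + 1 <= k)%N.
  have s1 : - s^-1 != 0 by [].
  rewrite -[X in (X <= _)%N]rE -(eqmx_scale _ s1) -YN -XM.
  apply: leq_trans (mxrankM_maxl _ _) _.
  apply: leq_trans (mxrankM_maxr _ _) _.
  exact: hr.
by rewrite addn1 ltnn.
Qed.

Import VectorInternalTheory.

Definition mklin (K : fieldType) (U W : lmodType K) (f : U -> W) (hf : linear f) : {linear U -> W} :=
  HB.pack f (GRing.isLinear.Build K U W *:%R f hf).

Lemma dimker (K : fieldType) (V : vectType K) (f : V -> V) :
  \dim (lker (linfun f)) = (dim V - \rank (lin1_mx (v2r \o f \o r2v)))%N.
Proof.
by rewrite /dimv /lker mx2vsK mxrank_ker; congr (_ - \rank _)%N; rewrite /linfun unlock.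
Qed.

Lemma exists_min (T : Type) (d : T -> nat) (x0 : T) : exists x, forall y, (d x <= d y)%N.
Proof.
suff H : forall m x, (d x <= m)%N -> exists x, forall y, (d x <= d y)%N by exact: (H _ x0).
elim=> [|m IH] x hx.
  by exists x => y; rewrite leqn0 in hx; rewrite (eqP hx).
case: (classic (exists y, (d y < d x)%N)) => [[y hy]|hn].
  by apply: (IH y); lia.
exists x => y; rewrite leqNgt; apply/negP => h; apply: hn; by exists y.
Qed.

Section Main.
Variables (K : numFieldType) (V : vectType K) (br : V -> V -> V).
Hypothesis hb : is_lie_bracket br.

Definition M x : 'M[K]_(dim V) := lin1_mx (v2r \o br x \o r2v).

Lemma hb1 w : linear (br ^~ w). Proof. by case: hb. Qed.
Lemma hb2 x : linear (br x). Proof. by case: hb. Qed.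
Lemma hb3 x : br x x = 0. Proof. by case: hb. Qed.

Lemma linM x : linear (v2r \o br x \o r2v).
Proof. by move=> a p q /=; rewrite linearP (hb2 x) linearP. Qed.

Lemma vM x v : v2r (br x v) = v2r v *m M x.
Proof. by rewrite /M (mul_rV_lin1 (mklin (linM x))) /= v2rK. Qed.

Lemma adE x v : ad br x v = br x v.
Proof. exact: (lfunE (mklin (hb2 x))). Qed.

Lemma dimZ x : \dim (centralizer br x) = (dim V - \rank (M x))%N.
Proof. exact: dimker. Qed.

Lemma M_lin F y t : M (F + t *: y) = M F + t *: M y.
Proof.
apply/matrixP => i j; rewrite !mxE /= [F + _]addrC.
by rewrite (hb1 _ t y F) linearP !mxE addrC.
Qed.

Lemma brN x v : br x (- v) = - br x v.
Proof. exact: (raddfN (mklin (hb2 x))). Qed.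

Lemma br_anti x y : br x y = - br y x.
Proof.
have h := hb3 (x + y).
have e1 : forall a b w, br (a + b) w = br a w + br b w.
  by move=> a b w; have := hb1 w 1 a b; rewrite !scale1r.
have e2 : forall a b w, br w (a + b) = br w a + br w b.
  by move=> a b w; have := hb2 w 1 a b; rewrite !scale1r.
rewrite e1 !e2 !hb3 add0r addr0 in h.
by apply/eqP; rewrite -addr_eq0 h.
Qed.

Lemma main_gen F F' (hmin : forall x, (\dim (centralizer br F) <= \dim (centralizer br x))%N)
  (hF' : F' \in centralizer br F) : forall y, exists z, br F' y = br F z.
Proof.
move=> y.
have hr : forall t : K, (\rank (M F + t *: M y)%R <= \rank (M F))%N.
  move=> t; have := hmin (F + t *: y); rewrite !dimZ M_lin.
  have := rank_leq_row (M F + t *: M y)%R; have := rank_leq_row (M F); move=> _ hb' h; by rewrite -(leq_sub2lE _ hb').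
have u0 : v2r F' *m M F = 0.
  by rewrite -vM; move: hF'; rewrite /centralizer memv_ker adE => /eqP ->; rewrite linear0.
have /submxP [D hD] := core hr u0.
exists (- r2v D).
rewrite brN br_anti; congr (- _).
apply: (can_inj v2rK).
by rewrite vM hD vM r2vK.
Qed.

End Main.

Theorem lemma2p19 (R : realType) (V : vectType R[i]) (br : V -> V -> V)
  (hg : simple_lie br) (F F' : V)
  (hF : principal_nilpotent br F) (hF' : F' \in centralizer br F) :
  forall y : V, exists z : V, br F' y = br F z.
Proof.
have hb := hg.1.
have [x0 hx0] := exists_min (fun x => \dim (centralizer br x)) F.
have hrk : is_lie_rank br (\dim (centralizer br x0)) by split; [exists x0|].
apply: (main_gen hb _ hF') => x.
by rewrite (hF.2 _ hrk).
Qed.
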